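(* Let $\{X_k\}_{k\ge0}$ and $\{Y_k\}_{k\ge0}$ be sequences of vectors in $\mathbb{R}^2$ with non-negative entries, and $\{M_k\}_{k\ge0}$ a sequence of $2\times2$ matrices, satisfying $X_{k+1}\le M_kX_k+Y_k$ (componentwise) for all $k\ge0$. Suppose $\sum_{k=0}^\infty\|Y_k\|<\infty$ and $$M_k=\begin{pmatrix}1&r\\ \alpha_k&\alpha_k\end{pmatrix}$$ for some fixed $r>0$ and non-negative reals $\alpha_k$ with $\sum_{k=0}^\infty\alpha_k<\infty$. Then: (1) the matrices $M_bM_{b-1}\cdots M_a$ are uniformly bounded over $0\le a<b<\infty$; (2) $\{X_k\}_{k\ge0}$ is uniformly bounded. *)

(* Defs.v *)
From mathcomp Require Import all_boot all_order all_algebra.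
From mathcomp Require Import reals.
Set Implicit Arguments. Unset Strict Implicit. Unset Printing Implicit Defensive.
Import Order.TTheory GRing.Theory Num.Theory.
Local Open Scope ring_scope.

Definition i0 : 'I_2 := @Ordinal 2 0 isT.
Definition i1 : 'I_2 := @Ordinal 2 1 isT.

Fixpoint mprod_from {R : ringType} (M : nat -> 'M[R]_2) (a n : nat) : 'M[R]_2 :=
  match n with
  | 0 => M a
  | n'.+1 => M (a + n'.+1)%N *m mprod_from M a n'
  end.

(* M_b M_(b-1) ... M_a  (for a <= b) *)
Definition mprod {R : ringType} (M : nat -> 'M[R]_2) (a b : nat) : 'M[R]_2 :=
  mprod_from M a (b - a).

(* l1 norm of a vector of R^2 (all norms on R^2 are equivalent) *)
Definition vnorm {R : numDomainType} (v : 'cV[R]_2) : R :=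
  \sum_(i < 2) `|v i 0|.

(* Main.v *)
Require Import Defs.
From mathcomp Require Import all_boot all_order all_algebra.
From mathcomp Require Import reals.
From mathcomp Require Import lra.
From mathcomp Require Import sequences exp.
Import Order.TTheory GRing.Theory Num.Theory.
Local Open Scope ring_scope.

Lemma ord2_cases (i : 'I_2) : i = i0 \/ i = i1.
Proof. case: i => [[|[|n]]] H; [left|right|]; try exact: val_inj. by []. Qed.

Lemma mulE (R : ringType) (A : 'M[R]_2) (v : 'cV[R]_2) i :
  (A *m v) i 0 = A i i0 * v i0 0 + A i i1 * v i1 0.
Proof. rewrite mxE !big_ord_recl big_ord0 addr0. congr (A i _ * v _ 0 + A i _ * v _ 0); exact: val_inj. Qed.

Lemma iter_bound (R : realType) (K : R) (f g beta : nat -> R) :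
  0 <= K -> (forall n, 0 <= f n) -> (forall n, 0 <= g n) -> (forall n, 0 <= beta n) ->
  (forall n, f n.+1 <= (1 + K * beta n) * f n + g n) ->
  forall n, f n <= expR (K * \sum_(k < n) beta k) * (f 0%N + \sum_(k < n) g k).
Proof.
move=> K0 f0 g0 b0 Hs; elim=> [|n IH].
  by rewrite !big_ord0 mulr0 expR0 mul1r addr0.
rewrite !big_ord_recr /= (mulrDr K) expRD addrA.
set E := expR (K * \sum_(i < n) beta i) in IH *.
set F := f 0%N + \sum_(i < n) g i in IH *.
have F0 : 0 <= F by rewrite addr_ge0 // sumr_ge0.
have E1 : 1 <= E.
  rewrite /E -expR0 ler_expR mulr_ge0 // sumr_ge0 //.
have e1 := expR_ge1Dx (K * beta n).
have Kb : 0 <= K * beta n by rewrite mulr_ge0.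
set t := K * beta n in e1 Kb *.
set et := expR t in e1 *.
have Eet : 1 <= E * et.
  have et1 : 1 <= et by apply: le_trans e1; rewrite lerDl.
  by rewrite -[1]mulr1; apply: ler_pM.
apply: le_trans (Hs n) _; rewrite mulrDr; apply: lerD.
  apply: le_trans (_ : et * (E * F) <= _).
    by apply: ler_pM => //; rewrite addr_ge0.
  by rewrite mulrA [et * E]mulrC.
by rewrite ler_peMl.
Qed.

Theorem proposition3p2 (R : realType) (X Y : nat -> 'cV[R]_2)
  (M : nat -> 'M[R]_2) (r : R) (alpha : nat -> R) :
  (forall k i, 0 <= X k i 0) ->
  (forall k i, 0 <= Y k i 0) ->
  (forall k i, X k.+1 i 0 <= (M k *m X k + Y k) i 0) ->
  (exists S : R, forall n, \sum_(k < n) vnorm (Y k) <= S) ->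
  0 < r ->
  (forall k, 0 <= alpha k) ->
  (exists A : R, forall n, \sum_(k < n) alpha k <= A) ->
  (forall k, M k i0 i0 = 1 /\ M k i0 i1 = r /\
             M k i1 i0 = alpha k /\ M k i1 i1 = alpha k) ->
  (exists C : R, forall a b, (a < b)%N -> forall i j, `|mprod M a b i j| <= C) /\
  (exists C : R, forall k, vnorm (X k) <= C).
Proof.
move=> HX HY HXY [S HS] r0 Ha [A HA] HM.
have A0 : 0 <= A by have := HA 0%N; rewrite big_ord0.
have Mnn : forall k i j, 0 <= M k i j.
  move=> k i j; have [h1 [h2 [h3 h4]]] := HM k.
  by case: (ord2_cases i) => ->; case: (ord2_cases j) => ->;
     rewrite ?h1 ?h2 ?h3 ?h4 // ltW.
set K := 1 + r.
have K0 : 0 <= K by rewrite /K addr_ge0 // ltW.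
pose m (v : 'cV[R]_2) := v i0 0 + r * v i1 0.
have step : forall k (v : 'cV[R]_2), (forall i, 0 <= v i 0) ->
    m (M k *m v) <= (1 + K * alpha k) * m v.
  move=> k v hv; have [h1 [h2 [h3 h4]]] := HM k.
  rewrite /m !mulE h1 h2 h3 h4 /K.
  move: (hv i0) (hv i1) (Ha k) => z1 z2 z3.
  have p1 : 0 <= alpha k * v i0 0 by rewrite mulr_ge0.
  have p2 : 0 <= r * r * alpha k * v i1 0 by rewrite !mulr_ge0 // ltW.
  nra.
have mpos : forall v : 'cV[R]_2, (forall i, 0 <= v i 0) -> 0 <= m v.
  by move=> v hv; rewrite /m addr_ge0 // mulr_ge0 // ltW.
have mle : forall v : 'cV[R]_2, (forall i, 0 <= v i 0) ->
    forall i, v i 0 <= (1 + r^-1) * m v.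
  move=> v hv i.
  have ri : r^-1 * r = 1 by rewrite mulVf // gt_eqF.
  have rp : 0 < r^-1 by rewrite invr_gt0.
  move: (hv i0) (hv i1) => z1 z2.
  have q1 : r^-1 * r * v i1 0 = v i1 0 by rewrite ri mul1r.
  have q2 : 0 <= r^-1 * v i0 0 by rewrite mulr_ge0 // ltW.
  have q3 : 0 <= r * v i1 0 by rewrite mulr_ge0 // ltW.
  by case: (ord2_cases i) => ->; rewrite /m; nra.
have mmono : forall u w : 'cV[R]_2, (forall i, u i 0 <= w i 0) -> m u <= m w.
  move=> u w h; rewrite /m lerD // ler_pM2l //.
have madd : forall u w : 'cV[R]_2, m (u + w) = m u + m w.
  by move=> u w; rewrite /m !mxE mulrDr addrACA.
have vn : forall v : 'cV[R]_2, (forall i, 0 <= v i 0) ->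
    vnorm v = v i0 0 + v i1 0.
  move=> v hv; rewrite /vnorm !big_ord_recl big_ord0 addr0 !ger0_norm ?hv //.
  by congr (v _ 0 + v _ 0); exact: val_inj.
have MXnn : forall k (v : 'cV[R]_2), (forall i, 0 <= v i 0) -> forall i, 0 <= (M k *m v) i 0.
  by move=> k v hv i; rewrite mulE addr_ge0 // mulr_ge0.
split.
  pose D := 1 + r + A.
  exists ((1 + r^-1) * (expR (K * A) * (K * D))).
  move=> a b ab i j; rewrite /mprod.
  move: (b - a)%N => n {ab b}.
  have Pnn : forall n i j, 0 <= mprod_from M a n i j.
    elim=> [|n' IH] i' j' /=; first exact: Mnn.
    by rewrite mxE sumr_ge0 // => l _; rewrite mulr_ge0.
  pose c n := col j (mprod_from M a n).
  have cnn : forall n i, 0 <= c n i 0 by move=> n' i'; rewrite mxE.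
  have cS : forall n, c n.+1 = M (a + n.+1)%N *m c n.
    by move=> n'; rewrite /c !colE /= mulmxA.
  have Hf : forall n, m (c n.+1) <= (1 + K * alpha (a + n.+1)%N) * m (c n) + 0.
    by move=> n'; rewrite addr0 cS step.
  have := @iter_bound R K _ _ _ K0 (fun n => mpos _ (cnn n)) (fun _ => lexx 0)
     (fun n => Ha (a + n.+1)%N) Hf n.
  move=> hb; rewrite [X in _ + X]big1 // addr0 in hb.
  have sA : \sum_(k < n) alpha (a + k.+1)%N <= A.
    have := HA (a.+1 + n)%N; rewrite big_split_ord.
    have -> : \sum_(k < n) alpha (a + k.+1)%N = \sum_(k < n) alpha (rshift a.+1 k).
      by apply: eq_bigr => k _; rewrite /= addSnnS.
    move=> h; apply: le_trans h; rewrite lerDr sumr_ge0 //.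
  have aA : alpha a <= A.
    have := HA a.+1; rewrite big_ord_recr /= => h; apply: le_trans h.
    by rewrite lerDr sumr_ge0.
  have f0 : m (c 0%N) <= K * D.
    have [h1 [h2 [h3 h4]]] := HM a.
    rewrite /m /c /= !mxE /K /D.
    by case: (ord2_cases j) => ->; rewrite ?h1 ?h2 ?h3 ?h4; nra.
  have -> : mprod_from M a n i j = c n i 0 by rewrite mxE.
  rewrite ger0_norm //; apply: le_trans (mle _ (cnn n) i) _.
  rewrite ler_pM2l ?addr_gt0 ?invr_gt0 //.
  apply: le_trans hb _; apply: ler_pM => //; first exact: expR_ge0.
    exact: mpos.
  by rewrite ler_expR; apply: ler_wpM2l.
pose f k := m (X k). pose g k := m (Y k).
have Hf : forall n, f n.+1 <= (1 + K * alpha n) * f n + g n.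
  move=> n; apply: le_trans (mmono _ _ (HXY n)) _.
  by rewrite madd lerD // step.
have hb := @iter_bound R K _ _ _ K0 (fun n => mpos _ (HX n)) (fun n => mpos _ (HY n)) Ha Hf.
have gS : forall n, \sum_(k < n) g k <= K * S.
  move=> n; apply: le_trans (_ : \sum_(k < n) K * vnorm (Y k) <= _).
    apply: ler_sum => k _; rewrite vn // /g /m /K.
    move: (HY k i0) (HY k i1) => z1 z2; nra.
  by rewrite -mulr_sumr; apply: ler_wpM2l.
exists (2 * ((1 + r^-1) * (expR (K * A) * (f 0%N + K * S)))).
move=> k; rewrite vn //.
have e : forall i, X k i 0 <= (1 + r^-1) * (expR (K * A) * (f 0%N + K * S)).
  move=> i; apply: le_trans (mle _ (HX k) i) _.
  rewrite ler_pM2l ?addr_gt0 ?invr_gt0 //.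
  apply: le_trans (hb k) _; apply: ler_pM.
  - exact: expR_ge0.
  - by rewrite addr_ge0 ?sumr_ge0 // => *; apply: mpos.
  - by rewrite ler_expR; apply: ler_wpM2l.
  - by rewrite lerD2l.
have := e i0; have := e i1; lra.
Qed.
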